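(* If $E$ is a pseudo effect algebra satisfying (RDP), then its state space $\mathcal S(E)$ is either empty or a nonempty Choquet simplex (with respect to the weak topology).
   Context: Pseudo effect algebra: partial algebra $(E;+,0,1)$ such that for all $a,b,c$: (i) $a+b$ and $(a+b)+c$ exist iff $b+c$ and $a+(b+c)$ exist, and then they are equal; (ii) there is exactly one $d$ and one $e$ with $a+d=e+a=1$; (iii) if $a+b$ exists there are $d,e$ with $a+b=d+a=b+e$; (iv) if $1+a$ or $a+1$ exists then $a=0$. (RDP): whenever $a_1+a_2=b_1+b_2$ there are $d_1,\dots,d_4$ with $d_1+d_2=a_1$, $d_3+d_4=a_2$, $d_1+d_3=b_1$, $d_2+d_4=b_2$. A state is a map $s:E\to[0,\infty)$ with $s(a+b)=s(a)+s(b)$ whenever $a+b$ is defined and $s(1)=1$; $\mathcal S(E)$ is the set of states, a convex subset of $\mathbb R^E$, with the weak topology of pointwise convergence (it is compact Hausdorff). A convex cone $C$ in a real vector space $V$ is strict if $C\cap -C=\{0\}$; it induces the order $x\le_C y$ iff $y-x\in C$; it is a lattice cone if $C$ is a lattice under $\le_C$. A base of $C$ is a convex $K\subseteq C$ such that every nonzero $y\in C$ is uniquely $y=\alpha x$ with $\alpha>0$, $x\in K$. A simplex is a convex set affinely isomorphic to a base of a lattice cone in some real vector space; a Choquet simplex is a compact simplex in a locally convex Hausdorff space. *)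

(* Defs.v *)
From Stdlib Require Import Reals List.
Open Scope R_scope.
Set Implicit Arguments.

(* The partial operation + is modelled as [add : E -> E -> option E];
   [add a b = Some c] means "a+b is defined and equals c". *)

Definition defined {E : Type} (add : E -> E -> option E) (a b : E) : Prop :=
  exists c, add a b = Some c.

Definition is_pseudo_effect_algebra {E : Type} (add : E -> E -> option E)
    (zero one : E) : Prop :=
  (forall a b c,
      (exists ab, add a b = Some ab /\ defined add ab c) <->
      (exists bc, add b c = Some bc /\ defined add a bc)) /\
  (forall a b c ab bc x y,
      add a b = Some ab -> add ab c = Some x ->
      add b c = Some bc -> add a bc = Some y -> x = y) /\
  (forall a, (exists d, add a d = Some one /\ forall d', add a d' = Some one -> d' = d) /\
             (exists e, add e a = Some one /\ forall e', add e' a = Some one -> e' = e)) /\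
  (forall a b s, add a b = Some s ->
      exists d e, add d a = Some s /\ add b e = Some s) /\
  (forall a, (defined add one a \/ defined add a one) -> a = zero).

Definition RDP {E : Type} (add : E -> E -> option E) : Prop :=
  forall a1 a2 b1 b2 s, add a1 a2 = Some s -> add b1 b2 = Some s ->
    exists d1 d2 d3 d4,
      add d1 d2 = Some a1 /\ add d3 d4 = Some a2 /\
      add d1 d3 = Some b1 /\ add d2 d4 = Some b2.

Definition is_state {E : Type} (add : E -> E -> option E) (one : E)
    (s : E -> R) : Prop :=
  (forall a, 0 <= s a) /\
  (forall a b c, add a b = Some c -> s c = s a + s b) /\
  s one = 1.

Record RVectorSpace := {
  vcar :> Type;
  vadd : vcar -> vcar -> vcar;
  vzero : vcar;
  vopp : vcar -> vcar;
  vscal : R -> vcar -> vcar;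
  vaddA : forall x y z, vadd x (vadd y z) = vadd (vadd x y) z;
  vaddC : forall x y, vadd x y = vadd y x;
  vadd0 : forall x, vadd x vzero = x;
  vaddN : forall x, vadd x (vopp x) = vzero;
  vscal1 : forall x, vscal 1 x = x;
  vscalA : forall a b x, vscal a (vscal b x) = vscal (a * b) x;
  vscalDr : forall a x y, vscal a (vadd x y) = vadd (vscal a x) (vscal a y);
  vscalDl : forall a b x, vscal (a + b) x = vadd (vscal a x) (vscal b x)
}.

Section Cones.
Context {W : RVectorSpace}.

Definition vsub (x y : W) : W := vadd W x (vopp W y).

Definition is_convex_cone (C : W -> Prop) : Prop :=
  C (vzero W) /\
  (forall x y, C x -> C y -> C (vadd W x y)) /\
  (forall a x, 0 <= a -> C x -> C (vscal W a x)).

Definition is_strict_cone (C : W -> Prop) : Prop :=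
  forall x, C x -> C (vopp W x) -> x = vzero W.

Definition cone_le (C : W -> Prop) (x y : W) : Prop := C (vsub y x).

Definition is_lattice_cone (C : W -> Prop) : Prop :=
  is_convex_cone C /\ is_strict_cone C /\
  (forall x y, C x -> C y ->
     (exists z, C z /\ cone_le C x z /\ cone_le C y z /\
        forall w, C w -> cone_le C x w -> cone_le C y w -> cone_le C z w) /\
     (exists z, C z /\ cone_le C z x /\ cone_le C z y /\
        forall w, C w -> cone_le C w x -> cone_le C w y -> cone_le C w z)).

Definition is_convex_W (K : W -> Prop) : Prop :=
  forall x y l, K x -> K y -> 0 <= l <= 1 ->
    K (vadd W (vscal W l x) (vscal W (1 - l) y)).

Definition is_base (C K : W -> Prop) : Prop :=
  is_convex_W K /\ (forall x, K x -> C x) /\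
  (forall y, C y -> y <> vzero W ->
     exists a x, 0 < a /\ K x /\ y = vscal W a x /\
       forall a' x', 0 < a' -> K x' -> y = vscal W a' x' -> a' = a /\ x' = x).

End Cones.

Definition conv_comb {E : Type} (l : R) (f g : E -> R) : E -> R :=
  fun x => l * f x + (1 - l) * g x.

Definition is_convex {E : Type} (S : (E -> R) -> Prop) : Prop :=
  forall f g l, S f -> S g -> 0 <= l <= 1 -> S (conv_comb l f g).

Definition is_simplex {E : Type} (S : (E -> R) -> Prop) : Prop :=
  is_convex S /\
  exists (W : RVectorSpace) (C K : W -> Prop) (phi : (E -> R) -> W),
    @is_lattice_cone W C /\ @is_base W C K /\
    (forall f, S f -> K (phi f)) /\
    (forall x, K x -> exists f, S f /\ phi f = x) /\
    (forall f g, S f -> S g -> phi f = phi g -> f = g) /\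
    (forall f g l, S f -> S g -> 0 <= l <= 1 ->
       phi (conv_comb l f g) = vadd W (vscal W l (phi f)) (vscal W (1 - l) (phi g))).

(** * Weak topology (pointwise convergence = product topology) on R^E *)
Definition weak_open {E : Type} (U : (E -> R) -> Prop) : Prop :=
  forall f, U f -> exists (F : list E) (eps : R), 0 < eps /\
    forall g, (forall x, In x F -> Rabs (g x - f x) < eps) -> U g.

Definition weak_compact {E : Type} (S : (E -> R) -> Prop) : Prop :=
  forall (I : Type) (U : I -> (E -> R) -> Prop),
    (forall i, weak_open (U i)) ->
    (forall f, S f -> exists i, U i f) ->
    exists (J : list I), forall f, S f -> exists i, In i J /\ U i f.

(** A Choquet simplex inside the locally convex Hausdorff space R^E with the
    weak topology: a compact simplex. *)
Definition is_Choquet_simplex {E : Type} (S : (E -> R) -> Prop) : Prop :=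
  is_simplex S /\ weak_compact S.

(* Main.v *)
Require Import Defs.
From Stdlib Require Import Reals.
From Stdlib Require Import Lra List Classical ClassicalEpsilon FunctionalExtensionality PropExtensionality.
Open Scope R_scope.

Lemma pea_assoc1 {E : Type} {add : E -> E -> option E} {zero one : E}
  (H : is_pseudo_effect_algebra add zero one) :
  forall a b c ab s, add a b = Some ab -> add ab c = Some s ->
  exists bc, add b c = Some bc /\ add a bc = Some s.
Proof.
  destruct H as [HA1 [HA2 _]]. intros a b c ab s Hab Hs.
  destruct (proj1 (HA1 a b c)) as [bc [Hbc [y Hy]]].
  { exists ab; split; [exact Hab | exists s; exact Hs]. }
  exists bc; split; [exact Hbc|].
  rewrite (HA2 a b c ab bc s y Hab Hs Hbc Hy); exact Hy.
Qed.

Lemma pea_assoc2 {E : Type} {add : E -> E -> option E} {zero one : E}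
  (H : is_pseudo_effect_algebra add zero one) :
  forall a b c bc s, add b c = Some bc -> add a bc = Some s ->
  exists ab, add a b = Some ab /\ add ab c = Some s.
Proof.
  destruct H as [HA1 [HA2 _]]. intros a b c bc s Hbc Hs.
  destruct (proj2 (HA1 a b c)) as [ab [Hab [y Hy]]].
  { exists bc; split; [exact Hbc | exists s; exact Hs]. }
  exists ab; split; [exact Hab|].
  rewrite <- (HA2 a b c ab bc y s Hab Hy Hbc Hs); exact Hy.
Qed.

Lemma pea_one_zero {E : Type} {add : E -> E -> option E} {zero one : E}
  (H : is_pseudo_effect_algebra add zero one) :
  add one zero = Some one /\ add zero one = Some one.
Proof.
  pose proof H as [_ [_ [HC [_ H4]]]].
  destruct (HC one) as [[d [Hd _]] [e [He _]]].
  assert (d = zero) by (apply H4; left; exists one; exact Hd).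
  assert (e = zero) by (apply H4; right; exists one; exact He).
  subst; auto.
Qed.

Lemma pea_zero_r {E : Type} {add : E -> E -> option E} {zero one : E}
  (H : is_pseudo_effect_algebra add zero one) : forall a, add a zero = Some a.
Proof.
  intro a. pose proof H as [_ [_ [HC _]]].
  destruct (pea_one_zero H) as [H10 _].
  destruct (proj2 (HC a)) as [e [He _]].
  destruct (proj1 (HC e)) as [d [Hd Hu]].
  assert (a = d) by (apply Hu; exact He). subst a.
  destruct (pea_assoc1 H e d zero one one Hd H10) as [bc [Hbc Hebc]].
  rewrite (Hu bc Hebc) in Hbc. exact Hbc.
Qed.

Lemma pea_zero_l {E : Type} {add : E -> E -> option E} {zero one : E}
  (H : is_pseudo_effect_algebra add zero one) : forall a, add zero a = Some a.
Proof.
  intro a. pose proof H as [_ [_ [HC _]]].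
  destruct (pea_one_zero H) as [_ H01].
  destruct (proj1 (HC a)) as [d [Hd _]].
  destruct (proj2 (HC d)) as [e [He Hu]].
  assert (a = e) by (apply Hu; exact Hd). subst a.
  destruct (pea_assoc2 H zero e d one one He H01) as [ab [Hab Habd]].
  rewrite (Hu ab Habd) in Hab. exact Hab.
Qed.

Lemma state_le1 {E : Type} {add : E -> E -> option E} {zero one : E}
  (H : is_pseudo_effect_algebra add zero one) (f : E -> R) :
  is_state add one f -> forall a, 0 <= f a <= 1.
Proof.
  intros [Pf [Af Of]] a. pose proof H as [_ [_ [HC _]]].
  destruct (proj1 (HC a)) as [d [Hd _]].
  pose proof (Af _ _ _ Hd). pose proof (Pf a). pose proof (Pf d). lra.
Qed.

Definition addf {E : Type} (add : E -> E -> option E) (f : E -> R) : Prop :=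
  forall a b c, add a b = Some c -> f c = f a + f b.
Definition Cn {E : Type} (add : E -> E -> option E) (f : E -> R) : Prop :=
  (forall a, 0 <= f a) /\ addf add f.

Lemma glb_ex (P : R -> Prop) : (exists x, P x) -> (forall x, P x -> 0 <= x) ->
  { m | (forall x, P x -> m <= x) /\ (forall m', (forall x, P x -> m' <= x) -> m' <= m) }.
Proof.
  intros Hne Hlb.
  destruct (completeness (fun y => P (- y))) as [l [Hub Hl]].
  - exists 0. intros y Hy. specialize (Hlb _ Hy). lra.
  - destruct Hne as [x Hx]. exists (- x). rewrite Ropp_involutive. exact Hx.
  - exists (- l). split.
    + intros x Hx. assert (- x <= l) by (apply Hub; rewrite Ropp_involutive; exact Hx). lra.
    + intros m' Hm'. assert (l <= - m').
      { apply Hl. intros y Hy. specialize (Hm' _ Hy). lra. }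
      lra.
Qed.

Lemma inf_exists {E : Type} {add : E -> E -> option E} {zero one : E}
  (H : is_pseudo_effect_algebra add zero one) (HR : RDP add) (f g : E -> R) :
  Cn add f -> Cn add g ->
  exists h, Cn add h /\ (forall a, h a <= f a) /\ (forall a, h a <= g a) /\
    (forall k, addf add k -> (forall a, k a <= f a) -> (forall a, k a <= g a) ->
       forall a, k a <= h a).
Proof.
  intros [Pf Af] [Pg Ag].
  pose proof H as [_ [_ [_ [H3 _]]]].
  pose (P := fun a r => exists a1 a2, add a1 a2 = Some a /\ r = f a1 + g a2).
  assert (Hne : forall a, exists r, P a r).
  { intro a. exists (f a + g zero). exists a, zero. split; [apply (pea_zero_r H)|reflexivity]. }
  assert (Hnn : forall a r, P a r -> 0 <= r).
  { intros a r [a1 [a2 [_ ->]]]. specialize (Pf a1); specialize (Pg a2); lra. }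
  pose (h := fun a => proj1_sig (glb_ex (P a) (Hne a) (Hnn a))).
  assert (H1 : forall a1 a2 a, add a1 a2 = Some a -> h a <= f a1 + g a2).
  { intros a1 a2 a Ha. unfold h. destruct (glb_ex (P a) (Hne a) (Hnn a)) as [m [Hm1 Hm2]].
    simpl. apply Hm1. exists a1, a2; auto. }
  assert (H2 : forall a m, (forall a1 a2, add a1 a2 = Some a -> m <= f a1 + g a2) -> m <= h a).
  { intros a m Hm. unfold h. destruct (glb_ex (P a) (Hne a) (Hnn a)) as [m0 [Hm1 Hm2]].
    simpl. apply Hm2. intros x [a1 [a2 [Ha ->]]]. apply Hm; auto. }
  assert (f0 : f zero = 0).
  { pose proof (Af _ _ _ (pea_zero_r H zero)). lra. }
  assert (g0 : g zero = 0).
  { pose proof (Ag _ _ _ (pea_zero_r H zero)). lra. }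
  exists h. split; [split|split; [|split]].
  - intro a. apply H2. intros a1 a2 _. specialize (Pf a1); specialize (Pg a2); lra.
  - intros a b c Hc. apply Rle_antisym.
    + assert (Hcon : forall a1 a2 b1 b2, add a1 a2 = Some a -> add b1 b2 = Some b ->
                h c <= f a1 + g a2 + (f b1 + g b2)).
      { intros a1 a2 b1 b2 Ha Hb.
        destruct (pea_assoc1 H a1 a2 b a c Ha Hc) as [t [Ht1 Ht2]].
        destruct (pea_assoc2 H a2 b1 b2 b t Hb Ht1) as [u [Hu1 Hu2]].
        destruct (H3 a2 b1 u Hu1) as [d [e' [Hd _]]].
        destruct (pea_assoc1 H d a2 b2 u t Hd Hu2) as [v [Hv1 Hv2]].
        destruct (pea_assoc2 H a1 d v t c Hv2 Ht2) as [w [Hw1 Hw2]].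
        pose proof (H1 w v c Hw2) as Hh. rewrite (Af _ _ _ Hw1), (Ag _ _ _ Hv1) in Hh.
        pose proof (Af _ _ _ Hd). pose proof (Af _ _ _ Hu1). lra. }
      assert (Hb' : forall b1 b2, add b1 b2 = Some b -> h c - (f b1 + g b2) <= h a).
      { intros b1 b2 Hb. apply H2. intros a1 a2 Ha. specialize (Hcon a1 a2 b1 b2 Ha Hb). lra. }
      assert (h c - h a <= h b).
      { apply H2. intros b1 b2 Hb. specialize (Hb' b1 b2 Hb). lra. }
      lra.
    + apply H2. intros c1 c2 Hc12.
      destruct (HR a b c1 c2 c Hc Hc12) as [d1 [d2 [d3 [d4 [E1 [E2 [E3 E4]]]]]]].
      pose proof (H1 _ _ _ E1). pose proof (H1 _ _ _ E2).
      rewrite (Af _ _ _ E3), (Ag _ _ _ E4). lra.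
  - intro a. pose proof (H1 a zero a (pea_zero_r H a)). lra.
  - intro a. pose proof (H1 zero a a (pea_zero_l H a)). lra.
  - intros k Ak Hkf Hkg a. apply H2. intros a1 a2 Ha. rewrite (Ak _ _ _ Ha).
    specialize (Hkf a1); specialize (Hkg a2); lra.
Qed.

Definition fadd {E : Type} (f g : E -> R) : E -> R := fun x => f x + g x.
Definition fzero {E : Type} : E -> R := fun _ => 0.
Definition fopp {E : Type} (f : E -> R) : E -> R := fun x => - f x.
Definition fscal {E : Type} (a : R) (f : E -> R) : E -> R := fun x => a * f x.

Ltac fext := intros; apply functional_extensionality; intros; unfold fadd, fzero, fopp, fscal; ring.

Lemma fvA {E} : forall x y z : E -> R, fadd x (fadd y z) = fadd (fadd x y) z. Proof. fext. Qed.
Lemma fvC {E} : forall x y : E -> R, fadd x y = fadd y x. Proof. fext. Qed.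
Lemma fv0 {E} : forall x : E -> R, fadd x fzero = x. Proof. fext. Qed.
Lemma fvN {E} : forall x : E -> R, fadd x (fopp x) = fzero. Proof. fext. Qed.
Lemma fv1 {E} : forall x : E -> R, fscal 1 x = x. Proof. fext. Qed.
Lemma fvSA {E} : forall a b (x : E -> R), fscal a (fscal b x) = fscal (a * b) x. Proof. fext. Qed.
Lemma fvDr {E} : forall a (x y : E -> R), fscal a (fadd x y) = fadd (fscal a x) (fscal a y). Proof. fext. Qed.
Lemma fvDl {E} : forall a b (x : E -> R), fscal (a + b) x = fadd (fscal a x) (fscal b x). Proof. fext. Qed.

Definition FunVS (E : Type) : RVectorSpace :=
  @Build_RVectorSpace (E -> R) fadd fzero fopp fscal fvA fvC fv0 fvN fv1 fvSA fvDr fvDl.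

Lemma state_convex {E : Type} (add : E -> E -> option E) (one : E) :
  is_convex (is_state add one).
Proof.
  intros f g l [Pf [Af Of]] [Pg [Ag Og]] Hl. unfold conv_comb. split; [|split].
  - intro a. specialize (Pf a); specialize (Pg a).
    apply Rplus_le_le_0_compat; apply Rmult_le_pos; lra.
  - intros a b c Hc. rewrite (Af _ _ _ Hc), (Ag _ _ _ Hc). ring.
  - rewrite Of, Og. ring.
Qed.

Lemma simplex_part {E : Type} {add : E -> E -> option E} {zero one : E}
  (H : is_pseudo_effect_algebra add zero one) (HR : RDP add) :
  is_simplex (is_state add one).
Proof.
  pose proof H as [_ [_ [HC _]]].
  split; [apply state_convex|].
  exists (FunVS E), (Cn add), (is_state add one), (fun f => f).
  split; [|split; [|split; [|split; [|split]]]].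
  -
    split; [|split].
    + split; [|split].
      * split; [intro a; cbn; unfold fzero; lra | intros a b c _; cbn; unfold fzero; ring].
      * intros x y [Px Ax] [Py Ay]. split.
        -- intro a; cbn; unfold fadd. specialize (Px a); specialize (Py a); lra.
        -- intros a b c Hc; cbn; unfold fadd. rewrite (Ax _ _ _ Hc), (Ay _ _ _ Hc); ring.
      * intros r x Hr [Px Ax]. split.
        -- intro a; cbn; unfold fscal. specialize (Px a). apply Rmult_le_pos; lra.
        -- intros a b c Hc; cbn; unfold fscal. rewrite (Ax _ _ _ Hc); ring.
    + intros x [Px _] [Pnx _]. apply functional_extensionality; intro a.
      specialize (Px a); specialize (Pnx a); cbn in *; unfold fopp, fzero in *; lra.
    + intros x y Cx Cy.
      destruct (inf_exists H HR x y Cx Cy) as [h [[Ph Ah] [Hhx [Hhy Hgr]]]].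
      destruct Cx as [Px Ax]; destruct Cy as [Py Ay].
      unfold cone_le, vsub; cbn; unfold fadd, fopp.
      split.
      * exists (fun a => x a + y a - h a). split; [|split; [|split]].
        -- split.
           ++ intro a. specialize (Px a); specialize (Hhy a); lra.
           ++ intros a b c Hc. rewrite (Ax _ _ _ Hc), (Ay _ _ _ Hc), (Ah _ _ _ Hc); ring.
        -- split.
           ++ intro a. specialize (Hhy a); lra.
           ++ intros a b c Hc. rewrite (Ax _ _ _ Hc), (Ay _ _ _ Hc), (Ah _ _ _ Hc); ring.
        -- split.
           ++ intro a. specialize (Hhx a); lra.
           ++ intros a b c Hc. rewrite (Ax _ _ _ Hc), (Ay _ _ _ Hc), (Ah _ _ _ Hc); ring.
        -- intros w [Pw Aw] [Pwx Awx] [Pwy Awy].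
           assert (Hk : forall a, x a + y a - w a <= h a).
           { apply Hgr.
             - intros a b c Hc. rewrite (Ax _ _ _ Hc), (Ay _ _ _ Hc), (Aw _ _ _ Hc); ring.
             - intro a. specialize (Pwy a); lra.
             - intro a. specialize (Pwx a); lra. }
           split.
           ++ intro a. specialize (Hk a); lra.
           ++ intros a b c Hc. rewrite (Ax _ _ _ Hc), (Ay _ _ _ Hc), (Ah _ _ _ Hc), (Aw _ _ _ Hc); ring.
      * exists h. split; [split; assumption|split; [|split]].
        -- split.
           ++ intro a. specialize (Hhx a); lra.
           ++ intros a b c Hc. rewrite (Ax _ _ _ Hc), (Ah _ _ _ Hc); ring.
        -- split.
           ++ intro a. specialize (Hhy a); lra.
           ++ intros a b c Hc. rewrite (Ay _ _ _ Hc), (Ah _ _ _ Hc); ring.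
        -- intros w [Pw Aw] [Pwx Awx] [Pwy Awy].
           assert (Hk : forall a, w a <= h a).
           { apply Hgr; [exact Aw| |].
             - intro a. specialize (Pwx a); lra.
             - intro a. specialize (Pwy a); lra. }
           split.
           ++ intro a. specialize (Hk a); lra.
           ++ intros a b c Hc. rewrite (Ah _ _ _ Hc), (Aw _ _ _ Hc); ring.
  -
    split; [|split].
    + intros x y l Hx Hy Hl. exact (state_convex add one x y l Hx Hy Hl).
    + intros f [Pf [Af _]]. split; assumption.
    + intros y [Py Ay] Hy0.
      assert (Hpos : 0 < y one).
      { destruct (Rle_lt_or_eq_dec 0 (y one) (Py one)) as [|Heq]; [assumption|].
        exfalso; apply Hy0. apply functional_extensionality; intro b. cbn; unfold fzero.
        destruct (proj1 (HC b)) as [d [Hd _]]. pose proof (Ay _ _ _ Hd).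
        pose proof (Py b). pose proof (Py d). lra. }
      exists (y one), (fun b => y b / y one). split; [exact Hpos|split; [|split]].
      * split; [|split].
        -- intro b. unfold Rdiv. apply Rmult_le_pos; [apply Py|].
           left; apply Rinv_0_lt_compat; exact Hpos.
        -- intros a b c Hc. rewrite (Ay _ _ _ Hc). field. lra.
        -- field. lra.
      * apply functional_extensionality; intro b. cbn; unfold fscal. field. lra.
      * intros a' x' Ha' [Px' [Ax' Ox']] Heq.
        assert (Ha : a' = y one).
        { rewrite Heq. cbn. unfold fscal. rewrite Ox'. ring. }
        split; [exact Ha|].
        apply functional_extensionality; intro b.
        pose proof (f_equal (fun F => F b) Heq) as Hb. cbn in Hb. unfold fscal in Hb.
        rewrite Hb, <- Ha. field. lra.
  - intros f Hf. exact Hf.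
  - intros x Kx. exists x; split; [exact Kx|reflexivity].
  - intros f g _ _ Hfg. exact Hfg.
  - intros f g l _ _ _. reflexivity.
Qed.

Definition sub {A : Type} (C D : A -> Prop) : Prop := forall x, C x -> D x.

Lemma set_ext {A : Type} (C D : A -> Prop) : sub C D -> sub D C -> C = D.
Proof.
  intros H1 H2. apply functional_extensionality; intro x.
  apply propositional_extensionality; split; auto.
Qed.

Inductive tower {A : Type} (s : (A -> Prop) -> (A -> Prop)) : (A -> Prop) -> Prop :=
| tw_succ : forall C, tower s C -> tower s (s C)
| tw_union : forall F : (A -> Prop) -> Prop, (forall C, F C -> tower s C) ->
    tower s (fun x => exists C, F C /\ C x).

Definition extreme {A : Type} (s : (A -> Prop) -> (A -> Prop)) (C : A -> Prop) : Prop :=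
  forall D, tower s D -> sub D C -> ~ sub C D -> sub (s D) C.

Lemma tower_lemma1 {A : Type} (s : (A -> Prop) -> (A -> Prop)) (Hinf : forall C, sub C (s C))
  (C : A -> Prop) : extreme s C -> forall D, tower s D -> sub D C \/ sub (s C) D.
Proof.
  intros HeC D TD. induction TD as [D' TD' IH | F HF IH].
  - destruct IH as [HD'C | HsCD'].
    + destruct (classic (sub C D')) as [HCD' | HnCD'].
      * right. rewrite (set_ext C D' HCD' HD'C). intros x Hx; exact Hx.
      * left. apply HeC; assumption.
    + right. intros x Hx. apply Hinf. apply HsCD'. exact Hx.
  - destruct (classic (exists G, F G /\ sub (s C) G)) as [[G [FG HG]] | Hn].
    + right. intros x Hx. exists G. split; auto.
    + left. intros x [G [FG Gx]]. destruct (IH G FG) as [HGC | HsCG].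
      * apply HGC; exact Gx.
      * exfalso. apply Hn. exists G; auto.
Qed.

Lemma tower_lemma2 {A : Type} (s : (A -> Prop) -> (A -> Prop)) (Hinf : forall C, sub C (s C))
  (C : A -> Prop) : tower s C -> extreme s C.
Proof.
  intro TC. induction TC as [C' TC' IH | F HF IH].
  - intros D TD HDs Hnot.
    destruct (tower_lemma1 s Hinf C' IH D TD) as [HDC' | HsC'D].
    + destruct (classic (sub C' D)) as [HC'D | HnC'D].
      * rewrite (set_ext D C' HDC' HC'D). intros x Hx; exact Hx.
      * intros x Hx. apply Hinf. apply (IH D TD HDC' HnC'D). exact Hx.
    + exfalso. apply Hnot. exact HsC'D.
  - intros D TD HDsub Hnot.
    destruct (not_all_ex_not _ _ Hnot) as [x Hx].
    apply imply_to_and in Hx. destruct Hx as [[G [FG Gx]] nDx].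
    destruct (tower_lemma1 s Hinf G (IH G FG) D TD) as [HDG | HsGD].
    + assert (HnGD : ~ sub G D) by (intro HGD; apply nDx; apply HGD; exact Gx).
      intros y Hy. exists G. split; [exact FG|]. apply (IH G FG D TD HDG HnGD). exact Hy.
    + exfalso. apply nDx. apply HsGD. apply Hinf. exact Gx.
Qed.

Lemma tower_comparable {A : Type} (s : (A -> Prop) -> (A -> Prop)) (Hinf : forall C, sub C (s C))
  (C D : A -> Prop) : tower s C -> tower s D -> sub C D \/ sub D C.
Proof.
  intros TC TD. destruct (tower_lemma1 s Hinf C (tower_lemma2 s Hinf C TC) D TD) as [H1 | H2].
  - right; exact H1.
  - left. intros x Hx. apply H2. apply Hinf. exact Hx.
Qed.

Definition chain {A : Type} (le : A -> A -> Prop) (P : A -> Prop) : Prop :=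
  forall x y, P x -> P y -> le x y \/ le y x.

Lemma zorn {A : Type} (le : A -> A -> Prop) (D : A -> Prop) :
  (forall x, le x x) -> (forall x y z, le x y -> le y z -> le x z) ->
  (forall Ch, (forall x, Ch x -> D x) -> chain le Ch ->
     exists b, D b /\ forall x, Ch x -> le x b) ->
  exists m, D m /\ forall y, D y -> le m y -> le y m.
Proof.
  intros Hrefl Htrans Hch. apply NNPP; intro Hno.
  assert (Hstep : forall m, D m -> exists y, D y /\ le m y /\ ~ le y m).
  { intros m Dm. apply NNPP; intro Hc. apply Hno. exists m. split; [exact Dm|].
    intros y Dy Hmy. apply NNPP; intro Hny. apply Hc. exists y; auto. }
  pose (good := fun (C : A -> Prop) y => D y /\ (forall x, C x -> le x y) /\ ~ C y).
  pose (s := fun C : A -> Prop =>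
    match excluded_middle_informative (exists y, good C y) with
    | left Hex => fun x => C x \/ x = proj1_sig (constructive_indefinite_description _ Hex)
    | right _ => C
    end).
  assert (Hinf : forall C, sub C (s C)).
  { intros C x Hx. unfold s. destruct (excluded_middle_informative _); [left|]; exact Hx. }
  assert (Htw : forall C, tower s C -> sub C D /\ chain le C).
  { intros C TC. induction TC as [C' TC' [IHD IHc] | F HF IH].
    - unfold s. destruct (excluded_middle_informative _) as [Hex|Hn]; [|split; assumption].
      pose proof (proj2_sig (constructive_indefinite_description _ Hex)) as [Dy [Huby _]].
      set (y := proj1_sig (constructive_indefinite_description _ Hex)) in *.
      split.
      + intros x [Hx | ->]; [apply IHD; exact Hx | exact Dy].
      + intros x z [Hx | ->] [Hz | ->].
        * apply IHc; assumption.
        * left; apply Huby; exact Hx.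
        * right; apply Huby; exact Hz.
        * left; apply Hrefl.
    - split.
      + intros x [G [FG Gx]]. apply (proj1 (IH G FG)). exact Gx.
      + intros x z [G1 [FG1 G1x]] [G2 [FG2 G2z]].
        destruct (tower_comparable s Hinf G1 G2 (HF G1 FG1) (HF G2 FG2)) as [H12 | H21].
        * apply (proj2 (IH G2 FG2)); [apply H12; exact G1x | exact G2z].
        * apply (proj2 (IH G1 FG1)); [exact G1x | apply H21; exact G2z]. }
  pose (U := fun x => exists C, tower s C /\ C x).
  assert (TU : tower s U) by (apply tw_union; auto).
  destruct (Htw U TU) as [UD Uch].
  destruct (Hch U UD Uch) as [b [Db Hb]].
  destruct (Hstep b Db) as [y [Dy [Hby Hnyb]]].
  assert (Hg : exists y, good U y).
  { exists y. split; [exact Dy|split].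
    - intros x Ux. apply Htrans with b; auto.
    - intro Uy. apply Hnyb. apply Hb. exact Uy. }
  assert (HsU : sub (s U) U).
  { intros x Hx. exists (s U). split; [apply tw_succ; exact TU | exact Hx]. }
  revert HsU. unfold s. destruct (excluded_middle_informative _) as [Hex|Hn]; [|contradiction].
  pose proof (proj2_sig (constructive_indefinite_description _ Hex)) as [_ [_ Hny']].
  intro HsU. apply Hny'. apply HsU. right; reflexivity.
Qed.

Definition is_filter {X : Type} (F : (X -> Prop) -> Prop) : Prop :=
  F (fun _ => True) /\
  (forall A B, F A -> (forall x, A x -> B x) -> F B) /\
  (forall A B, F A -> F B -> F (fun x => A x /\ B x)) /\
  ~ F (fun _ => False).

Lemma ultra {X : Type} (F0 : (X -> Prop) -> Prop) : is_filter F0 ->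
  exists M, is_filter M /\ (forall A, F0 A -> M A) /\
    (forall A, M A \/ M (fun x => ~ A x)).
Proof.
  intro HF0.
  destruct (zorn (fun F G : (X -> Prop) -> Prop => forall B, F B -> G B)
             (fun F => is_filter F /\ forall A, F0 A -> F A)) as [M [[HM HF0M] Hmax]].
  - intros x B Hx; exact Hx.
  - intros x y z Hxy Hyz B Hx. apply Hyz, Hxy, Hx.
  - intros Ch HCh Hchain.
    exists (fun B => F0 B \/ exists G, Ch G /\ G B). split; [split|].
    + destruct HF0 as [F0T [F0up [F0i F0p]]]. split; [|split; [|split]].
      * left; exact F0T.
      * intros A B [HA | [G [ChG GA]]] HAB.
        -- left; apply (F0up A B HA HAB).
        -- right; exists G; split; [exact ChG|]. apply (proj1 (proj2 (proj1 (HCh G ChG))) A B GA HAB).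
      * intros A B [HA | [G [ChG GA]]] [HB | [G' [ChG' GB]]].
        -- left; apply F0i; assumption.
        -- right; exists G'; split; [exact ChG'|].
           destruct (HCh G' ChG') as [[_ [_ [Gi _]]] G0]. apply Gi; [apply G0; exact HA| exact GB].
        -- right; exists G; split; [exact ChG|].
           destruct (HCh G ChG) as [[_ [_ [Gi _]]] G0]. apply Gi; [exact GA | apply G0; exact HB].
        -- destruct (Hchain G G' ChG ChG') as [H1 | H2].
           ++ right; exists G'; split; [exact ChG'|].
              destruct (HCh G' ChG') as [[_ [_ [Gi _]]] G0]. apply Gi; [apply H1; exact GA | exact GB].
           ++ right; exists G; split; [exact ChG|].
              destruct (HCh G ChG) as [[_ [_ [Gi _]]] G0]. apply Gi; [exact GA | apply H2; exact GB].
      * intros [H0 | [G [ChG G0]]].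
        -- apply F0p; exact H0.
        -- destruct (HCh G ChG) as [[_ [_ [_ Gp]]] _]. apply Gp; exact G0.
    + intros A HA; left; exact HA.
    + intros G ChG B GB. right; exists G; auto.
  - exists M. split; [exact HM|split; [exact HF0M|]].
    intro B. destruct (classic (M (fun x => ~ B x))) as [Hn | Hn]; [right; exact Hn|left].
    destruct HM as [MT [Mup [Mi Mp]]].
    pose (G := fun C : X -> Prop => exists Dd, M Dd /\ forall x, Dd x -> B x -> C x).
    assert (HMG : forall C, M C -> G C).
    { intros C HC. exists C. split; auto. }
    assert (HG : is_filter G /\ forall A, F0 A -> G A).
    { split; [split; [|split; [|split]]|].
      - apply HMG; exact MT.
      - intros A A' [Dd [MD HD]] HAA'. exists Dd. split; auto.
      - intros A A' [Dd [MD HD]] [Dd' [MD' HD']]. exists (fun x => Dd x /\ Dd' x).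
        split; [apply Mi; assumption|]. intros x [Hx Hx'] Bx. split; auto.
      - intros [Dd [MD HD]]. apply Hn. apply (Mup Dd); [exact MD|].
        intros x Dx Bx. apply (HD x Dx Bx).
      - intros A HA. apply HMG, HF0M, HA. }
    apply (Hmax G HG HMG). exists (fun _ => True). split; auto.
Qed.


Lemma compact_part {E : Type} {add : E -> E -> option E} {zero one : E}
  (H : is_pseudo_effect_algebra add zero one) : weak_compact (is_state add one).
Proof.
  unfold weak_compact. intros I U Hopen Hcover.
  apply NNPP; intro Hno.
  assert (Hno' : forall J : list I, exists f, is_state add one f /\ forall i, In i J -> ~ U i f).
  { intros J. apply NNPP; intro Hc. apply Hno. exists J. intros f Sf.
    apply NNPP; intro Hc2. apply Hc. exists f. split; auto.
    intros i Hi Ui. apply Hc2. exists i; auto. }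
  pose (F0 := fun B : (E -> R) -> Prop => exists J : list I,
          forall f, is_state add one f -> (forall i, In i J -> ~ U i f) -> B f).
  assert (HF0 : is_filter F0).
  { split; [|split; [|split]].
    - exists nil. auto.
    - intros A B [J HJ] HAB. exists J. intros f Sf Hf. apply HAB, HJ; auto.
    - intros A B [J1 HJ1] [J2 HJ2]. exists (J1 ++ J2). intros f Sf Hf. split.
      + apply HJ1; auto. intros i Hi. apply Hf. apply in_or_app; left; exact Hi.
      + apply HJ2; auto. intros i Hi. apply Hf. apply in_or_app; right; exact Hi.
    - intros [J HJ]. destruct (Hno' J) as [f [Sf Hf]]. exact (HJ f Sf Hf). }
  destruct (ultra F0 HF0) as [M [[Mfull [Mup [Minter Mprop]]] [HF0M HMu]]].
  assert (MS : M (is_state add one)).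
  { apply HF0M. exists nil. intros f Sf _. exact Sf. }
  assert (Mne : forall B, M B -> exists f, B f).
  { intros B HB. apply NNPP; intro Hn. apply Mprop. apply (Mup B); [exact HB|].
    intros f Bf. apply Hn. exists f; exact Bf. }
  pose (T := fun x t => M (fun g : E -> R => t <= g x)).
  assert (Hlim : forall x, exists L, is_lub (T x) L).
  { intro x. destruct (completeness (T x)) as [L HL].
    - exists 1. intros t Ht. destruct (Mne _ (Minter _ _ Ht MS)) as [g [Hg Sg]].
      pose proof (state_le1 H g Sg x). lra.
    - exists 0. unfold T. apply (Mup _ _ MS). intros g Sg. apply (state_le1 H g Sg x).
    - exists L; exact HL. }
  pose (f0 := fun x => proj1_sig (constructive_indefinite_description _ (Hlim x))).
  assert (Hf0 : forall x, is_lub (T x) (f0 x)).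
  { intro x. exact (proj2_sig (constructive_indefinite_description _ (Hlim x))). }
  assert (Hkey : forall x eps, 0 < eps -> M (fun g => Rabs (g x - f0 x) < eps)).
  { intros x eps Heps. destruct (Hf0 x) as [Hub Hl].
    assert (Hlow : exists t, T x t /\ f0 x - eps < t).
    { apply NNPP; intro Hn.
      assert (f0 x <= f0 x - eps).
      { apply Hl. intros t Ht. apply Rnot_lt_le. intro Hlt. apply Hn. exists t; auto. }
      lra. }
    destruct Hlow as [t [Ht Hlt]].
    destruct (HMu (fun g : E -> R => f0 x + eps <= g x)) as [Hup | Hup].
    - pose proof (Hub _ Hup). lra.
    - apply (Mup _ _ (Minter _ _ Ht Hup)). intros g [Hg1 Hg2].
      apply Rnot_le_lt in Hg2. apply Rabs_def1; lra. }
  assert (Hnb : forall (L : list E) eps, 0 < eps ->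
             M (fun g => forall x, In x L -> Rabs (g x - f0 x) < eps)).
  { intros L eps Heps. induction L as [|a L IH].
    - apply (Mup _ _ Mfull). intros g _ x Hx. destruct Hx.
    - apply (Mup _ _ (Minter _ _ (Hkey a eps Heps) IH)). intros g [Hg1 Hg2] x [Hx | Hx].
      + subst; exact Hg1.
      + apply Hg2; exact Hx. }
  assert (Sf0 : is_state add one f0).
  { split; [|split].
    - intro a. destruct (Hf0 a) as [Hub _]. apply Hub. unfold T.
      apply (Mup _ _ MS). intros g Sg. apply (state_le1 H g Sg a).
    - intros a b c Hc. apply NNPP; intro Hneq.
      assert (Hrdef : exists r, r = f0 c - (f0 a + f0 b)) by (eexists; reflexivity).
      destruct Hrdef as [r Hrdef].
      assert (Hr : 0 < Rabs r).
      { apply Rabs_pos_lt. intro Hr0. apply Hneq. lra. }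
      assert (Heps : 0 < Rabs r / 3) by lra.
      destruct (Mne _ (Minter _ _ (Hnb (a :: b :: c :: nil) _ Heps) MS)) as [g [Hg [_ [Ag _]]]].
      pose proof (Ag _ _ _ Hc) as Hgc.
      assert (Ha : Rabs (g a - f0 a) < Rabs r / 3) by (apply Hg; simpl; auto).
      assert (Hb : Rabs (g b - f0 b) < Rabs r / 3) by (apply Hg; simpl; auto).
      assert (Hc' : Rabs (g c - f0 c) < Rabs r / 3) by (apply Hg; simpl; auto).
      apply Rabs_def2 in Ha. apply Rabs_def2 in Hb. apply Rabs_def2 in Hc'.
      assert (Rabs r < Rabs r) by (apply Rabs_def1; lra). lra.
    - destruct (Hf0 one) as [Hub Hl]. apply Rle_antisym.
      + apply Hl. intros t Ht. destruct (Mne _ (Minter _ _ Ht MS)) as [g [Hg Sg]].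
        pose proof (state_le1 H g Sg one). lra.
      + apply Hub. unfold T. apply (Mup _ _ MS). intros g [_ [_ Og]]. rewrite Og. lra. }
  destruct (Hcover f0 Sf0) as [i Hi].
  destruct (Hopen i f0 Hi) as [L [eps [Heps Hsub]]].
  assert (MU : M (U i)) by (apply (Mup _ _ (Hnb L eps Heps)); exact Hsub).
  assert (MnU : M (fun f => ~ U i f)).
  { apply HF0M. exists (i :: nil). intros f _ Hf. apply Hf. simpl; auto. }
  apply Mprop. apply (Mup _ _ (Minter _ _ MU MnU)). intros f [H1 H2]. exact (H2 H1).
Qed.

Theorem theorem5p1 (E : Type) (add : E -> E -> option E) (zero one : E)
    (hPEA : is_pseudo_effect_algebra add zero one) (hRDP : RDP add) :
  (forall s, ~ is_state add one s) \/
  ((exists s, is_state add one s) /\ is_Choquet_simplex (is_state add one)).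
Proof.
  destruct (classic (exists s, is_state add one s)) as [Hex | Hn].
  - right. split; [exact Hex|]. split.
    + exact (simplex_part hPEA hRDP).
    + exact (compact_part hPEA).
  - left. intros s Hs. apply Hn. exists s; exact Hs.
Qed.
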